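(* Let $\mathcal{X}\subseteq\{0,1\}^n$ be a nonempty set of feasible solutions, let $\hat c\in\mathbb{R}^n_{\ge 0}$ be the nominal cost vector, and for $\lambda\in\Lambda\subseteq[0,1]$ let $\mathcal{U}(\lambda)=\prod_{i=1}^n[(1-\lambda)\hat c_i,(1+\lambda)\hat c_i]$. Let $w:\Lambda\to\mathbb{R}_{\ge 0}$ be a weight function such that \[ val(x)=\int_\Lambda w(\lambda)\Big(\max_{c\in\mathcal{U}(\lambda)} c^t x\Big)\,d\lambda \] is well-defined (finite) for all $x\in\mathcal{X}$. Then any nominal solution $\hat x$, i.e. any minimizer of $\hat c^t x$ over $x\in\mathcal{X}$, is an optimal solution of the problem $\min_{x\in\mathcal{X}} val(x)$.
   Context: This is the ''compromise approach to variable-sized uncertainty'' for min-max robust combinatorial optimization: the nominal problem is $\min\{c^tx : x\in\mathcal{X}\}$, the uncertainty set $\mathcal{U}(\lambda)$ has known shape but unknown size $\lambda$, and one seeks a single solution minimizing the $w$-weighted integral over $\lambda$ of the worst-case objective. *)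

(* Defs.v *)
From HB Require Import structures.
From mathcomp Require Import all_boot all_order all_algebra.
From mathcomp Require Import all_classical all_reals all_analysis.
Set Implicit Arguments. Unset Strict Implicit. Unset Printing Implicit Defensive.
Import Order.TTheory GRing.Theory Num.Theory.
Local Open Scope classical_set_scope.
Local Open Scope ring_scope.

Definition cost {R : realType} {n : nat} (c : 'I_n -> R) (x : 'I_n -> bool) : R :=
  \sum_(i < n) c i * (x i)%:R.

Definition Uset {R : realType} {n : nat} (chat : 'I_n -> R) (l : R) : set ('I_n -> R) :=
  [set c | forall i, (1 - l) * chat i <= c i <= (1 + l) * chat i].

Definition worst_case {R : realType} {n : nat} (chat : 'I_n -> R)
    (x : 'I_n -> bool) (l : R) : R :=
  sup [set cost c x | c in Uset chat l].

Definition cval {R : realType} {n : nat} (Lam : set R) (w : R -> R)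
    (chat : 'I_n -> R) (x : 'I_n -> bool) : \bar R :=
  (\int[@lebesgue_measure R]_(l in Lam) (w l * worst_case chat x l)%:E)%E.

(* Main.v *)
Require Import Defs.
From HB Require Import structures.
From mathcomp Require Import all_boot all_order all_algebra.
From mathcomp Require Import all_classical all_reals all_analysis.
From mathcomp Require Import lra.
Import Order.TTheory GRing.Theory Num.Theory.
Local Open Scope classical_set_scope.
Local Open Scope ring_scope.

Lemma wc_eq (R : realType) (n : nat) (chat : 'I_n -> R) x (l : R) :
  (forall i, 0 <= chat i) -> 0 <= l ->
  worst_case chat x l = (1 + l) * cost chat x.
Proof.
move=> hc hl.
have hmem : [set cost c x | c in Uset chat l] ((1 + l) * cost chat x).
  exists (fun i => (1 + l) * chat i).
    move=> i; apply/andP; split => //.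
    by apply: ler_wpM2r => //; lra.
  by rewrite /cost mulr_sumr; apply: eq_bigr => i _; rewrite mulrA.
have hub : ubound [set cost c x | c in Uset chat l] ((1 + l) * cost chat x).
  move=> _ [c hcU <-]; rewrite /cost mulr_sumr; apply: ler_sum => i _.
  rewrite mulrA; apply: ler_wpM2r; first by case: (x i).
  by case/andP: (hcU i).
apply/eqP; rewrite eq_le; apply/andP; split.
  by apply: ge_sup => //; exists ((1 + l) * cost chat x).
by apply: ub_le_sup => //; exists ((1 + l) * cost chat x).
Qed.

Theorem theorem1 (R : realType) (n : nat) (X : set ('I_n -> bool))
  (chat : 'I_n -> R) (Lam : set R) (w : R -> R) (xhat : 'I_n -> bool) :
  X !=set0 ->
  (forall i, 0 <= chat i) ->
  measurable Lam ->
  Lam `<=` `[0, 1] ->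
  (forall l, Lam l -> 0 <= w l) ->
  (forall x, X x ->
     (@lebesgue_measure R).-integrable Lam
       (fun l => (w l * worst_case chat x l)%:E)) ->
  X xhat ->
  (forall x, X x -> cost chat xhat <= cost chat x) ->
  forall x, X x -> (cval Lam w chat xhat <= cval Lam w chat x)%E.
Proof.
move=> _ hc mL sL hw hint Xh hmin x Xx.
apply: le_integral => //; [exact: hint | exact: hint |].
move=> l; rewrite inE => Ll.
have := sL _ Ll; rewrite /= in_itv /= => /andP[l0 l1].
rewrite lee_fin !wc_eq //; apply: ler_wpM2l; first exact: hw.
by apply: ler_wpM2l; [lra | exact: hmin].
Qed.
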